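(* Let $P\subseteq\mathbb{R}^2$ be a nonempty closed convex set such that $\tau P=P^{\circ}$. If $\gamma$ is a real $2\times 2$ matrix with $\det\gamma=\pm1$, then $\tau(\gamma P)=(\gamma P)^{\circ}$.
   Context: $\tau:\mathbb{R}^2\to\mathbb{R}^2$ denotes the $90^\circ$ counterclockwise rotation. The polar of a set $S\subseteq\mathbb{R}^2$ is $S^{\circ}=\{x\in\mathbb{R}^2: y^\top x\le 1\text{ for all }y\in S\}$. *)

(* Defs.v *)
From HB Require Import structures.
From mathcomp Require Import all_boot all_order all_algebra.
From mathcomp Require Import all_classical all_reals all_analysis.
Set Implicit Arguments. Unset Strict Implicit. Unset Printing Implicit Defensive.
Import Order.TTheory GRing.Theory Num.Theory.
Local Open Scope ring_scope.
Local Open Scope classical_set_scope.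

Definition dotv (R : realType) (y x : 'cV[R]_2) : R := (y^T *m x) ord0 ord0.

(* tau: rotation by 90 degrees counterclockwise: (x1,x2) |-> (-x2, x1) *)
Definition tau_mx (R : realType) : 'M[R]_2 :=
  \matrix_(i < 2, j < 2) (if (i == 0) && (j == 1) then -1
                          else if (i == 1) && (j == 0) then 1 else 0).

Definition tau (R : realType) (x : 'cV[R]_2) : 'cV[R]_2 := tau_mx R *m x.

Definition polar (R : realType) (S : set 'cV[R]_2) : set 'cV[R]_2 :=
  [set x | forall y, S y -> dotv y x <= 1].

Definition convex_set2 (R : realType) (S : set 'cV[R]_2) : Prop :=
  forall x y (t : R), S x -> S y -> 0 <= t <= 1 -> S (t *: x + (1 - t) *: y).

Definition mx_image (R : realType) (g : 'M[R]_2) (S : set 'cV[R]_2) : set 'cV[R]_2 :=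
  (fun x => g *m x) @` S.

(* closedness of a subset of R^2 for the standard (product) topology;
   R^o is needed only so that the matrix topology instance is found. *)
Definition closed2 (R : realType) (S : set 'cV[R]_2) : Prop :=
  closed (S : set 'cV[R^o]_2).

(* Main.v *)
Require Import Defs.
From HB Require Import structures.
From mathcomp Require Import all_boot all_order all_algebra.
From mathcomp Require Import all_classical all_reals all_analysis.
From mathcomp Require Import ring.
Import Order.TTheory GRing.Theory Num.Theory.
Local Open Scope ring_scope.
Local Open Scope classical_set_scope.

Lemma sum2 (R : nmodType) (F : 'I_2 -> R) : \sum_(i < 2) F i = F 0 + F 1.
Proof. by rewrite big_ord_recl big_ord_recl big_ord0 addr0; congr (_ + F _); apply/val_inj. Qed.

Lemma det2 (R : comRingType) (A : 'M[R]_2) : \det A = A 0 0 * A 1 1 - A 0 1 * A 1 0.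
Proof.
rewrite (expand_det_row _ 0) sum2 /cofactor !det_mx11 !mxE /=.
have -> : (lift 0 0 : 'I_2) = 1 by apply/val_inj.
have -> : (lift 1 0 : 'I_2) = 0 by apply/val_inj.
rewrite expr0 expr1; ring.
Qed.

Lemma ord2_cases (i : 'I_2) : i = 0 \/ i = 1.
Proof. case: i => [[|[|i]] Hi]; [left|right|by []]; exact/val_inj. Qed.

Lemma key (R : realType) (g : 'M[R]_2) : g^T *m tau_mx R *m g = \det g *: tau_mx R.
Proof.
rewrite det2; apply/matrixP => i j; rewrite !mxE !sum2 !mxE !sum2 !mxE.
by case: (ord2_cases i) => ->; case: (ord2_cases j) => -> /=; ring.
Qed.

Lemma dot_mul (R : realType) (A : 'M[R]_2) (y x : 'cV[R]_2) :
  dotv (A *m y) x = dotv y (A^T *m x).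
Proof. by rewrite /dotv trmx_mul mulmxA. Qed.

Lemma dot_key (R : realType) (g : 'M[R]_2) (q p : 'cV[R]_2) :
  dotv (g *m q) (tau (g *m p)) = \det g * dotv q (tau p).
Proof.
rewrite /dotv /tau trmx_mul !mulmxA -(mulmxA q^T g^T) -(mulmxA q^T _ g) key.
by rewrite -scalemxAr -scalemxAl mxE.
Qed.

Lemma antisym (R : realType) (q p : 'cV[R]_2) : dotv q (tau p) = - dotv p (tau q).
Proof.
rewrite /dotv /tau !mxE !sum2 !mxE !sum2 !mxE /=; ring.
Qed.

Lemma tautau (R : realType) (x : 'cV[R]_2) : tau (tau x) = - x.
Proof.
apply/matrixP => i j; rewrite /tau !mxE !sum2 !mxE !sum2 !mxE.
have -> : j = 0 by apply/val_inj; case: j => [[|j] Hj].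
by case: (ord2_cases i) => -> /=; ring.
Qed.

Lemma tau_inj (R : realType) (x y : 'cV[R]_2) : tau x = tau y -> x = y.
Proof. by move=> /(congr1 (@tau R)); rewrite !tautau => /oppr_inj. Qed.

Lemma tauN (R : realType) (x : 'cV[R]_2) : tau (- x) = - tau x.
Proof. by rewrite /tau mulmxN. Qed.

Lemma dotvN (R : realType) (y x : 'cV[R]_2) : dotv y (- x) = - dotv y x.
Proof. by rewrite /dotv mulmxN mxE. Qed.

Theorem proposition3 (R : realType) (P : set 'cV[R]_2) (g : 'M[R]_2) :
  P !=set0 -> closed2 P -> convex_set2 P ->
  @tau R @` P = polar P ->
  (\det g = 1 \/ \det g = -1) ->
  @tau R @` (mx_image g P) = polar (mx_image g P).
Proof.
move=> _ _ _ HP hdet.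
have Ptau : forall q, P q -> polar P (tau q) by move=> q Pq; rewrite -HP; exists q.
have Psym : forall p, P p -> P (- p).
  move=> p Pp.
  have : polar P (tau (- p)).
    move=> q Pq; rewrite tauN dotvN antisym opprK; exact: Ptau.
  by rewrite -HP => -[p' Pp' /tau_inj <-].
apply/seteqP; split.
  move=> _ [_ [p Pp <-] <-] _ [q Pq <-].
  rewrite dot_key; case: hdet => ->.
    by rewrite mul1r; apply: Ptau.
  by rewrite mulN1r antisym opprK; apply: Ptau.
move=> x Hx.
have : polar P (g^T *m x).
  by move=> q Pq; rewrite -dot_mul; apply: Hx; exists q.
rewrite -HP => -[p0 Pp0 e].
have gu : g^T \in unitmx.
  by rewrite unitmxE det_tr unitfE; case: hdet => ->; rewrite ?oppr_eq0 oner_neq0.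
case: hdet => hd.
  exists (g *m p0); first by exists p0.
  rewrite -(mulKmx gu x) -e -[tau (g *m p0)](mulKmx gu); congr (_ *m _).
  by rewrite /tau !mulmxA key hd scale1r.
exists (g *m (- p0)); first by exists (- p0); [apply: Psym|].
rewrite -(mulKmx gu x) -e -[tau (g *m - p0)](mulKmx gu); congr (_ *m _).
by rewrite /tau !mulmxA key hd scaleN1r mulNmx mulmxN opprK.
Qed.
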